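(* For every $\delta>0$ and $n\in\mathbb{N}$ there exists $N\in\mathbb{N}$ such that the following holds for every $N$-partitioned hypergraph $H$ and every choice of vertices $\gamma_{ik}\in V_{ik}$, $i<k$, $i,k\in[N]$, such that the degree of $\gamma_{ik}$ in every $(i,j,k)$-triad with $i<j<k$, $j\in[N]$, is at least $\delta$: there exist an induced $n$-partitioned subhypergraph $H'$ of $H$ with index set $I\subseteq[N]$ and vertices $\alpha_{ij},\beta_{ij}\in V_{ij}$, $i<j$, $i,j\in I$, such that $\{\alpha_{ij},\beta_{jk},\gamma_{ik}\}$ is an edge in the $(i,j,k)$-triad for all $i<j<k$, $i,j,k\in I$.
   Context: An $n$-partitioned hypergraph $H$ is a finite $3$-uniform hypergraph whose vertex set is partitioned into nonempty sets $V_{ij}$, $1\le i<j\le n$, such that every edge has, for some $1\le i<j<k\le n$, exactly one vertex in each of $V_{ij}$, $V_{ik}$, $V_{jk}$; the set of such edges is the $(i,j,k)$-triad. The degree of a vertex $v\in V_{ik}$ in the $(i,j,k)$-triad is the number of edges of that triad containing $v$ divided by $|V_{ij}||V_{jk}|$. For $I\subseteq[n]$, the induced subhypergraph with index set $I$ is the $|I|$-partitioned hypergraph with parts $V_{ij}$, $i<j$, $i,j\in I$ (indexed by elements of $I$) and all edges of $H$ contained in the union of these parts. *)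

(* Defs.v *)
From HB Require Import structures.
From mathcomp Require Import all_boot all_order all_algebra.
From mathcomp Require Import reals.
Set Implicit Arguments. Unset Strict Implicit. Unset Printing Implicit Defensive.
Import Order.TTheory GRing.Theory Num.Theory.
Local Open Scope ring_scope.

(* Parts V_ij are indexed by pairs (i,j) of 'I_N;
   only the parts with i < j are meaningful (they are required nonempty);
   parts with i >= j are ignored everywhere. *)
Record parthyp (N : nat) := ParthHyp {
  part : 'I_N -> 'I_N -> finType;
  part_nonempty : forall i j : 'I_N, (i < j)%N -> (0 < #|part i j|)%N;
  edge : forall i j k : 'I_N, part i j -> part j k -> part i k -> bool
}.

Definition triad_deg (R : realType) (N : nat) (H : parthyp N) (i j k : 'I_N)
    (v : part H i k) : R :=
  (#|[set p : (part H i j * part H j k)%type | @edge N H i j k p.1 p.2 v]|%:R)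
  / ((#|part H i j| * #|part H j k|)%N%:R).
Arguments triad_deg R [N] H i j k v.

(* Main.v *)
Require Import Defs.
From HB Require Import structures.
From mathcomp Require Import all_boot all_order all_algebra.
From mathcomp Require Import reals.
From Stdlib Require Import ClassicalEpsilon.
Import Order.TTheory GRing.Theory Num.Theory.
Set Implicit Arguments. Unset Strict Implicit. Unset Printing Implicit Defensive.

Lemma card_setE (T : finType) (Q : pred T) : #|[set x | Q x]| = \sum_(x : T) (Q x : nat).
Proof.
rewrite -sum1_card big_mkcond /=; apply: eq_bigr => x _; rewrite inE; by case: (Q x).
Qed.

Lemma card_setinE (T : finType) (S : {set T}) (Q : pred T) :
  #|[set x in S | Q x]| = \sum_(x in S) (Q x : nat).
Proof.
rewrite -sum1_card big_mkcond /= [RHS]big_mkcond /=; apply: eq_bigr => x _.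
rewrite inE; by case: (x \in S); case: (Q x).
Qed.

Lemma sum_const_all (T : finType) (c : nat) : \sum_(x : T) c = #|T| * c.
Proof. by rewrite sum_nat_const. Qed.

Lemma dcount (A B : finType) (P : A -> B -> bool) (S : {set B}) :
  \sum_(x : A) #|[set y in S | P x y]| = \sum_(y in S) #|[set x | P x y]|.
Proof.
rewrite (eq_bigr (fun x => \sum_(y in S) (P x y : nat))); last first.
  by move=> x _; rewrite (card_setinE S (fun y => P x y)).
rewrite exchange_big /=; apply: eq_bigr => y _; by rewrite (card_setE (fun x => P x y)).
Qed.

Lemma pair_count (A B : finType) (P : A -> B -> bool) :
  #|[set p : A * B | P p.1 p.2]| = \sum_(x : A) #|[set y | P x y]|.
Proof.
rewrite (card_setE (fun p : A * B => P p.1 p.2)).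
rewrite [RHS](eq_bigr (fun x => \sum_(y : B) (P x y : nat))); last first.
  by move=> x _; rewrite (card_setE (fun y => P x y)).
by rewrite pair_big /=.
Qed.

Lemma avg (A B : finType) (P : A -> B -> bool) (S : {set B}) (K : nat) :
  0 < #|A| -> (forall y, y \in S -> #|A| <= K * #|[set x | P x y]|) ->
  exists x, #|S| <= K * #|[set y in S | P x y]|.
Proof.
move=> A0 HS.
case: (boolP [exists x, #|S| <= K * #|[set y in S | P x y]|]) => [/existsP//|].
rewrite negb_exists => /forallP H.
have H1 : \sum_(x : A) (K * #|[set y in S | P x y]|).+1 <= \sum_(x : A) #|S|.
  by apply: leq_sum => x _; have := H x; rewrite -ltnNge.
have H2 : \sum_(y in S) #|A| <= \sum_(x : A) K * #|[set y in S | P x y]|.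
  by rewrite -big_distrr /= dcount big_distrr /=; apply: leq_sum => y /HS.
move: H2; rewrite sum_nat_const => H2.
move: H1; rewrite sum_const_all.
under eq_bigr do rewrite -addn1.
rewrite big_split /= sum_const_all => H1.
have := leq_trans (leq_add H2 (leqnn _)) H1.
rewrite mulnC muln1 -[X in _ <= X]addn0 leq_add2l leqn0 => /eqP A00.
by rewrite A00 in A0.
Qed.

Lemma perY (A B : finType) (P : A -> B -> bool) (K : nat) :
  0 < #|B| -> 2 * (#|A| * #|B|) <= K * #|[set p : A * B | P p.1 p.2]| ->
  #|A| <= K * #|[set x | #|B| <= K * #|[set y | P x y]|]|.
Proof.
move=> B0; rewrite pair_count big_distrr /=.
set G := [set x | _].
have H : \sum_(x : A) K * #|[set y | P x y]| <=
         \sum_(x : A) (K * #|B| * (x \in G) + #|B|).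
  apply: leq_sum => x _; rewrite inE.
  case: (leqP #|B| (K * #|[set y | P x y]|)) => h /=.
    by rewrite muln1 (leq_trans _ (leq_addr _ _)) // leq_mul2l max_card orbT.
  by rewrite muln0 add0n ltnW.
move: H; rewrite big_split /= sum_const_all -big_distrr /=.
have cG : \sum_(x : A) ((x \in G) : nat) = #|G|.
  by rewrite -sum1_card [RHS]big_mkcond; apply: eq_bigr => x _; case: (x \in G).
rewrite -[\sum_i K * #|B| * _]big_distrr /= cG => H H2.
have H3 := leq_trans H2 H.
have : #|A| * #|B| <= K * #|B| * #|G|.
  by rewrite -(leq_add2r (#|A| * #|B|)) addnn -mul2n.
by move=> h; rewrite -(leq_pmul2r B0) mulnAC.
Qed.

Definition oget (b : bool) (T : Type) (f : b -> T) : option T :=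
  (if b as c return (c -> T) -> option T then fun f => Some (f isT) else fun _ => None) f.

Lemma ogetE (b : bool) (T : Type) (f : b -> T) (h : b) : oget f = Some (f h).
Proof. move: f h; case: b => f h //=; by rewrite (bool_irrelevance h isT). Qed.

Definition col N (H : parthyp N) (j : 'I_N) := forall i : 'I_N, (i < j)%N -> part H i j.
Definition gamT N (H : parthyp N) := forall i k : 'I_N, (i < k)%N -> part H i k.

Definition okc N (H : parthyp N) (g : gamT H) (j : 'I_N) (c : col H j) (a y : 'I_N)
  (b : part H j y) : bool :=
  match oget (c a), oget (g a y) with Some x, Some z => edge x b z | _, _ => false end.

Arguments okc {N H} g {j} c a y b.
Definition goodc N (H : parthyp N) (g : gamT H) (K : nat) (j : 'I_N) (c : col H j) (a y : 'I_N) : bool :=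
  #|part H j y| <= K * #|[set b | okc g c a y b]|.

Arguments goodc {N H} g K {j} c a y.
Definition degK N (H : parthyp N) (g : gamT H) (K : nat) :=
  forall (i j k : 'I_N) (hij : (i < j)%N) (hjk : (j < k)%N) (hik : (i < k)%N),
  2 * (#|part H i j| * #|part H j k|) <=
    K * #|[set p : part H i j * part H j k | edge p.1 p.2 (g i k hik)]|.

Definition okx N (H : parthyp N) (g : gamT H) (a j : 'I_N) (x : part H a j) (y : 'I_N) (b : part H j y) : bool :=
  match oget (g a y) with Some z => edge x b z | None => false end.

Arguments okx {N H} g {a j} x y b.
Lemma A1 N (H : parthyp N) (g : gamT H) (K : nat) (hd : degK g K) (a j : 'I_N) (haj : a < j)
  (S : {set 'I_N}) (hS : forall y, y \in S -> j < y) :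
  exists x : part H a j, #|S| <= K * #|[set y in S | #|part H j y| <= K * #|[set b | okx g x y b]|]|.
Proof.
apply: avg; first exact: part_nonempty.
move=> y /hS hjy.
apply: perY; first exact: part_nonempty.
have hay : a < y := ltn_trans haj hjy.
have -> : [set p : part H a j * part H j y | okx g p.1 y p.2] =
          [set p : part H a j * part H j y | edge p.1 p.2 (g a y hay)].
  by apply/setP => p; rewrite !inE /okx (ogetE _ hay).
exact: hd.
Qed.

Lemma inner1 N (H : parthyp N) (g : gamT H) (K : nat) (hd : degK g K) (j : 'I_N) (c0 : col H j) :
  forall m (Q S : {set 'I_N}), #|Q| = m -> (forall a, a \in Q -> a < j) ->
  (forall y, y \in S -> j < y) ->
  exists c : col H j, exists S' : {set 'I_N},
    [/\ S' \subset S, #|S| <= K ^ m * #|S'| & forall a y, a \in Q -> y \in S' -> goodc g K c a y].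
Proof.
elim=> [|m IH] Q S hQ hQj hS.
  exists c0, S; split => //; first by rewrite expn0 mul1n.
  by move=> a y; rewrite (cards0_eq hQ) inE.
have [a aQ] : exists a, a \in Q by apply/card_gt0P; rewrite hQ.
have hQ' : #|Q :\ a| = m by move: hQ; rewrite (cardsD1 a) aQ add1n => -[].
have [c [S1 [sub1 card1 good1]]] : exists c : col H j, exists S' : {set 'I_N},
    [/\ S' \subset S, #|S| <= K ^ m * #|S'| & forall a' y, a' \in Q :\ a -> y \in S' -> goodc g K c a' y].
  by apply: IH => // a'; rewrite inE => /andP[_ /hQj].
have haj := hQj a aQ.
have hS1 : forall y, y \in S1 -> j < y by move=> y h; apply: hS; apply: (subsetP sub1).
have [x hx] := A1 hd haj hS1.
set S2 := [set y in S1 | _] in hx.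
pose c' := @dfwith 'I_N (fun i => (i < j)%N -> part H i j) c a (fun _ => x).
exists c', S2; split.
- by apply: subset_trans sub1; apply/subsetP => y; rewrite inE => /andP[].
- by rewrite expnS (mulnC K) -mulnA; apply: leq_trans card1 _; rewrite leq_mul2l hx orbT.
- move=> a' y; case: (eqVneq a a') => [<- _|ne].
    rewrite inE => /andP[_]; rewrite /goodc.
    have -> : [set b | okc g c' a y b] = [set b | okx g x y b] => //.
    by apply/setP => b; rewrite !inE /okc /c' dfwith_in (ogetE _ haj).
  move=> a'Q yS2.
  have yS1 : y \in S1 by move: yS2; rewrite inE => /andP[].
  have := good1 a' y; rewrite in_setD1 eq_sym ne a'Q => /(_ isT yS1).
  by rewrite /goodc /okc /c' dfwith_out.
Qed.

Definition Inv1 N (H : parthyp N) (g : gamT H) (K : nat) (al : forall k, col H k)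
  (X0 S : {set 'I_N}) :=
  forall a b y, a \in X0 -> b \in X0 -> y \in S -> a < b -> goodc g K (al b) a y.
Definition Good1 N (H : parthyp N) (g : gamT H) (K : nat) (al : forall k, col H k)
  (X : {set 'I_N}) :=
  forall a b c, a \in X -> b \in X -> c \in X -> a < b -> b < c -> goodc g K (al b) a c.
Definition hseq (K M t : nat) := iter t (fun v => (K ^ M * v).+1) 0.

Lemma outer1 N (H : parthyp N) (g : gamT H) (K : nat) (hd : degK g K) (K0 : 0 < K) (M : nat) :
  forall t (X0 S : {set 'I_N}) (al0 : forall k, col H k),
  #|X0| + t <= M -> (forall x y, x \in X0 -> y \in S -> x < y) ->
  Inv1 g K al0 X0 S -> Good1 g K al0 X0 -> hseq K M t <= #|S| ->
  exists (X : {set 'I_N}) (al : forall k, col H k), [/\ X0 \subset X, #|X| = #|X0| + t & Good1 g K al X].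
Proof.
elim=> [|t IH] X0 S al0 hM hlt hI hG hS.
  by exists X0, al0; rewrite addn0.
have [j0 j0S] : exists j, j \in S by apply/card_gt0P; apply: leq_trans hS.
case: (arg_minnP (fun y : 'I_N => (y : nat)) j0S) => j jS jmin.
have {}jS : j \in S := jS.
set S1 := [set y in S | j < y].
have hS1 : forall y, y \in S1 -> j < y by move=> y; rewrite inE => /andP[].
have hX0j : forall a, a \in X0 -> a < j by move=> a h; exact: hlt a j h jS.
have [c [S' [sub' card' good']]] := inner1 hd (al0 j) (erefl #|X0|) hX0j hS1.
pose al1 := @dfwith 'I_N (fun k => col H k) al0 j c.
have jX0 : j \notin X0 by apply/negP => /hX0j; rewrite ltnn.
have cU : #|j |: X0| = #|X0|.+1 by rewrite cardsU1 jX0.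
have leJ : forall x, x \in j |: X0 -> x <= j.
  by move=> x /setU1P[->//|/hX0j/ltnW].
have S'S : forall y, y \in S' -> y \in S.
  by move=> y /(subsetP sub'); rewrite inE => /andP[].
have al1o : forall b, b \in X0 -> al1 b = al0 b.
  by move=> b bX; apply: dfwith_out; rewrite neq_ltn hX0j ?orbT.
have H1 : #|j |: X0| + t <= M by rewrite cU addSn -addnS.
have H2 : forall x y, x \in j |: X0 -> y \in S' -> x < y.
  move=> x y /setU1P[->|xX] yS'; first by apply: hS1; apply: (subsetP sub').
  exact: hlt x y xX (S'S y yS').
have H3 : Inv1 g K al1 (j |: X0) S'.
  move=> a b y ha hb yS' ab.
  have bj := leJ b hb.
  have aX : a \in X0.
    by case/setU1P: ha => [ej|//]; move: (leq_trans ab bj); rewrite ej ltnn.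
  case/setU1P: hb => [ej|bX].
    by rewrite ej /al1 dfwith_in; apply: good'.
  by rewrite al1o //; apply: hI => //; apply: S'S.
have H4 : Good1 g K al1 (j |: X0).
  move=> a b c' ha hb hc ab bc.
  have bX : b \in X0.
    by case/setU1P: hb => [ej|//]; move: (leq_trans bc (leJ c' hc)); rewrite ej ltnn.
  have aX : a \in X0.
    by case/setU1P: ha => [ej|//]; move: (ltn_trans ab (hX0j b bX)); rewrite ej ltnn.
  rewrite al1o //.
  case/setU1P: hc => [->|cX]; first exact: hI.
  exact: hG.
have H5 : hseq K M t <= #|S'|.
  have eS1 : S1 = S :\ j.
    apply/setP => y; rewrite !inE; case: eqVneq => [->|ne]; first by rewrite ltnn andbF.
    case yS: (y \in S); rewrite ?andbF //= ltn_neqAle jmin // andbT.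
    by rewrite eq_sym.
  have cS : #|S| = #|S1|.+1 by rewrite (cardsD1 j S) eS1 jS.
  move: hS; rewrite cS /= ltnS => hS.
  have h1 := leq_trans hS card'.
  have hexp : K ^ #|X0| <= K ^ M.
    by apply: (leq_pexp2l K0); apply: leq_trans hM; rewrite addnS ltnW // ltnS leq_addr.
  rewrite -(@leq_pmul2l (K ^ M)) ?expn_gt0 ?K0 //.
  by apply: leq_trans h1 _; rewrite leq_mul2r hexp orbT.
have [X [al [subX cardX GX]]] := IH (j |: X0) S' al1 H1 H2 H3 H4 H5.
exists X, al; split.
+ by apply: subset_trans subX; apply/subsetP => x xX; rewrite setU1r.
+ by rewrite cardX cU addSn addnS.
+ exact: GX.
Qed.

Lemma Dlem N (H : parthyp N) (g : gamT H) (K : nat) (al : forall k, col H k) (X : {set 'I_N})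
  (GX : Good1 g K al X) (b c : 'I_N) (bX : b \in X) (cX : c \in X) (bc : b < c)
  (L : {set 'I_N}) (hL : forall a, a \in L -> (a \in X) && (a < b)) :
  exists beta : part H b c, #|L| <= K * #|[set a in L | okc g (al b) a c beta]|.
Proof.
apply: avg; first exact: part_nonempty.
by move=> a /hL /andP[aX ab]; exact: GX a b c aX bX cX ab bc.
Qed.

Lemma inner2 N (H : parthyp N) (g : gamT H) (K : nat) (al : forall k, col H k) (X : {set 'I_N})
  (GX : Good1 g K al X) (b : 'I_N) (bX : b \in X) :
  forall m (Tq L0 : {set 'I_N}), #|Tq| = m -> (forall c, c \in Tq -> (c \in X) && (b < c)) ->
  (forall a, a \in L0 -> (a \in X) && (a < b)) ->
  exists L : {set 'I_N}, [/\ L \subset L0, #|L0| <= K ^ m * #|L| &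
    forall c, c \in Tq -> exists beta : part H b c, forall a, a \in L -> okc g (al b) a c beta].
Proof.
elim=> [|m IH] Tq L0 hT hTq hL0.
  exists L0; split => //; first by rewrite expn0 mul1n.
  by move=> c; rewrite (cards0_eq hT) inE.
have [c cT] : exists c, c \in Tq by apply/card_gt0P; rewrite hT.
have hT' : #|Tq :\ c| = m by move: hT; rewrite (cardsD1 c) cT add1n => -[].
have [L1 [sub1 card1 w1]] : exists L : {set 'I_N}, [/\ L \subset L0, #|L0| <= K ^ m * #|L| &
    forall c', c' \in Tq :\ c -> exists beta : part H b c', forall a, a \in L -> okc g (al b) a c' beta].
  by apply: IH => // c'; rewrite inE => /andP[_ /hTq].
have /andP[cX bc] := hTq c cT.
have hL1 : forall a, a \in L1 -> (a \in X) && (a < b) by move=> a /(subsetP sub1) /hL0.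
have [beta hbeta] := Dlem GX bX cX bc hL1.
exists [set a in L1 | okc g (al b) a c beta]; split.
- by apply: subset_trans sub1; apply/subsetP => y; rewrite inE => /andP[].
- by rewrite expnS (mulnC K) -mulnA; apply: leq_trans card1 _; rewrite leq_mul2l hbeta orbT.
- move=> c' c'T; case: (eqVneq c' c) => [->|ne].
    by exists beta => a; rewrite inE => /andP[].
  have := w1 c'; rewrite in_setD1 ne c'T => /(_ isT) [beta' hb'].
  by exists beta' => a; rewrite inE => /andP[/hb'].
Qed.

Definition Inv2 N (H : parthyp N) (g : gamT H) (al : forall k, col H k) (T C : {set 'I_N}) :=
  forall b c, b \in T -> c \in T -> b < c ->
    exists beta : part H b c, forall a, a \in T :|: C -> a < b -> okc g (al b) a c beta.

Lemma outer2 N (H : parthyp N) (g : gamT H) (K : nat) (K0 : 0 < K) (al : forall k, col H k)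
  (X : {set 'I_N}) (GX : Good1 g K al X) (n : nat) :
  forall s (T C : {set 'I_N}), T \subset X -> C \subset X ->
  (forall x y, x \in C -> y \in T -> x < y) -> #|T| + s <= n -> hseq K n s <= #|C| ->
  Inv2 g al T C ->
  exists I : {set 'I_N}, [/\ I \subset X, #|I| = #|T| + s & Inv2 g al I set0].
Proof.
elim=> [|s IH] T C TX CX hlt hn hS hI.
  exists T; split => //; first by rewrite addn0.
  move=> b c bT cT bc; have [beta hb] := hI b c bT cT bc.
  by exists beta => a; rewrite setU0 => aT; apply: hb; rewrite inE aT.
have [j0 j0C] : exists j, j \in C by apply/card_gt0P; apply: leq_trans hS.
case: (arg_maxnP (fun y : 'I_N => (y : nat)) j0C) => b bC bmax.
have {}bC : b \in C := bC.
have bX : b \in X := subsetP CX b bC.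
set L0 := C :\ b.
have hTq : forall c, c \in T -> (c \in X) && (b < c).
  by move=> c cT; rewrite (subsetP TX c cT) (hlt b c bC cT).
have hL0 : forall a, a \in L0 -> (a \in X) && (a < b).
  move=> a; rewrite in_setD1 => /andP[ne aC].
  have ab : a <= b := bmax a aC.
  by rewrite (subsetP CX a aC) ltn_neqAle ne ab.
have [L [subL cardL wL]] := inner2 GX bX (erefl #|T|) hTq hL0.
have LC : forall a, a \in L -> a \in C.
  by move=> a /(subsetP subL); rewrite in_setD1 => /andP[].
have bT : b \notin T by apply/negP => /(hlt b b bC); rewrite ltnn.
have cU : #|b |: T| = #|T|.+1 by rewrite cardsU1 bT.
have H1 : b |: T \subset X by rewrite subUset sub1set bX TX.
have H2 : L \subset X by apply/subsetP => a /LC /(subsetP CX).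
have H3 : forall x y, x \in L -> y \in b |: T -> x < y.
  move=> x y xL /setU1P[->|yT]; first by have /andP[] := hL0 x (subsetP subL x xL).
  exact: hlt x y (LC x xL) yT.
have H4 : #|b |: T| + s <= n by rewrite cU addSn -addnS.
have H5 : hseq K n s <= #|L|.
  have cS : #|C| = #|L0|.+1 by rewrite (cardsD1 b C) bC.
  move: hS; rewrite cS /= ltnS => hS.
  have h1 := leq_trans hS cardL.
  have hexp : K ^ #|T| <= K ^ n.
    by apply: (leq_pexp2l K0); apply: leq_trans hn; rewrite addnS ltnW // ltnS leq_addr.
  rewrite -(@leq_pmul2l (K ^ n)) ?expn_gt0 ?K0 //.
  by apply: leq_trans h1 _; rewrite leq_mul2r hexp orbT.
have H6 : Inv2 g al (b |: T) L.
  move=> b' c' hb' hc' bc'.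
  case/setU1P: hc' => [ec|cT].
    exfalso; move: bc'; rewrite ec; case/setU1P: hb' => [->|b'T]; first by rewrite ltnn.
    by rewrite ltnNge ltnW // (hlt b b' bC b'T).
  case/setU1P: hb' => [eb|b'T].
    subst b'; have [beta hb] := wL c' cT.
    exists beta => a; rewrite in_setU => /orP[/setU1P[->|aT]|aL] ab.
    - by rewrite ltnn in ab.
    - by move: ab; rewrite ltnNge ltnW // (hlt b a bC aT).
    - exact: hb.
  have [beta hb] := hI b' c' b'T cT bc'.
  exists beta => a; rewrite in_setU => /orP[/setU1P[->|aT]|aL] ab; apply: hb => //.
  - by rewrite in_setU bC orbT.
  - by rewrite in_setU aT.
  - by rewrite in_setU LC ?orbT.
have [I [IX cardI hI']] := IH (b |: T) L H1 H2 H3 H4 H5 H6.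
exists I; split => //.
by rewrite cardI cU addSn addnS.
Qed.


Lemma sorted_enum_set N (I : {set 'I_N}) : sorted (fun a b : 'I_N => a < b) (enum I).
Proof.
rewrite /enum_mem -enumT; apply: sorted_filter.
  by move=> y x z; apply: ltn_trans.
have := iota_ltn_sorted 0 N; rewrite -val_enum_ord sorted_map.
by [].
Qed.

Local Open Scope ring_scope.

Theorem lemma4p6 (R : realType) (delta : R) (hdelta : 0 < delta) (n : nat) :
  exists N : nat,
  forall (H : parthyp N)
         (gamma : forall i k : 'I_N, (i < k)%N -> part H i k),
  (forall (i j k : 'I_N) (hij : (i < j)%N) (hjk : (j < k)%N) (hik : (i < k)%N),
      delta <= triad_deg R H i j k (gamma i k hik)) ->
  exists f : 'I_n -> 'I_N,
    {homo f : x y / (x < y)%N} /\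
    exists alpha beta : forall i j : 'I_n, (i < j)%N -> part H (f i) (f j),
      forall (i j k : 'I_n) (hij : (i < j)%N) (hjk : (j < k)%N)
             (hik : (f i < f k)%N),
        @edge N H _ _ _ (alpha i j hij) (beta j k hjk) (gamma (f i) (f k) hik).
Proof.
set K := Num.Def.archi_bound (2 / delta).
have hK : 2 < K%:R * delta.
  by rewrite -ltr_pdivrMr // archi_boundP // divr_ge0 // ltW.
have K0 : (0 < K)%N.
  rewrite lt0n; apply/eqP => eK; move: hK; rewrite eK mul0r.
  by rewrite ltNge ltW // ltr0n.
set M := hseq K n n.
exists (hseq K M M) => H gamma hyp.
have hd : degK gamma K.
  move=> i j k hij hjk hik.
  have := hyp i j k hij hjk hik; rewrite /triad_deg.
  set E := #|[set _ | _]|; set D := (#|part H i j| * #|part H j k|)%N.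
  have D0 : (0 < D)%N by rewrite muln_gt0 !part_nonempty.
  have D0' : 0 < D%:R :> R by rewrite ltr0n.
  rewrite ler_pdivlMr // => hE.
  rewrite -(ler_nat R) (natrM _ 2 D) (natrM _ K E).
  apply: le_trans (_ : K%:R * (delta * D%:R) <= _); last first.
    by rewrite ler_wpM2l // ler0n.
  by rewrite mulrA ler_wpM2r ?ler0n // ltW.
pose al0 : forall k, col H k := fun k i h => enum_val (Ordinal (part_nonempty H h)).
have [X [al [_ cardX GX]]] := @outer1 _ H gamma K hd K0 M M set0 setT al0
  ltac:(by rewrite cards0) ltac:(by move=> x y; rewrite inE) ltac:(by move=> a b y; rewrite inE)
  ltac:(by move=> a b c; rewrite inE) ltac:(by rewrite cardsT card_ord).
have [I [IX cardI hI]] := @outer2 _ H gamma K K0 al X GX n n set0 X (sub0set _) (subxx _)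
  ltac:(by move=> x y _; rewrite inE) ltac:(by rewrite cards0) ltac:(by rewrite cardX cards0)
  ltac:(by move=> b c; rewrite inE).
have eI : #|I| = n by rewrite cardI cards0.
pose f (i : 'I_n) : 'I_(hseq K M M) := enum_val (cast_ord (esym eI) i).
have fI : forall i, f i \in I by move=> i; exact: enum_valP.
have mono : forall x y : 'I_n, (x < y)%N -> (f x < f y)%N.
  move=> x y xy; rewrite /f !(enum_val_nth (f x)).
  apply: (sorted_ltn_nth (leT := fun a b : 'I_(hseq K M M) => (a < b)%N)).
  - by move=> b a c; apply: ltn_trans.
  - exact: sorted_enum_set.
  - by rewrite inE /= -cardE eI.
  - by rewrite inE /= -cardE eI.
  - exact: xy.
have wit : forall (j k : 'I_n) (h : (j < k)%N), exists beta : part H (f j) (f k),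
    forall a, a \in I -> (a < f j)%N -> okc gamma (al (f j)) a (f k) beta.
  move=> j k h; have [beta hb] := hI (f j) (f k) (fI j) (fI k) (mono j k h).
  by exists beta => a aI; apply: hb; rewrite setU0.
exists f; split; first exact: mono.
exists (fun i j h => al (f j) (f i) (mono i j h)).
exists (fun j k h => proj1_sig (constructive_indefinite_description _ (wit j k h))).
move=> i j k hij hjk hik.
have := proj2_sig (constructive_indefinite_description _ (wit j k hjk)) (f i) (fI i) (mono i j hij).
by rewrite /okc (ogetE _ (mono i j hij)) (ogetE _ hik).
Qed.
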